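(* In the transaction packaging game described in the context, let $\sigma^*$ be a mixed strategy. Suppose there exists $w\in\mathbb{R}$ such that for every $\mathsf{tx}\in M$: if $p^{\sigma^*}(\mathsf{tx})=0$ then $v(\mathsf{tx})\exp(-\lambda p^{\sigma^*}(\mathsf{tx}))\le w$; if $0<p^{\sigma^*}(\mathsf{tx})<1$ then $v(\mathsf{tx})\exp(-\lambda p^{\sigma^*}(\mathsf{tx}))=w$; and if $p^{\sigma^*}(\mathsf{tx})=1$ then $v(\mathsf{tx})\exp(-\lambda p^{\sigma^*}(\mathsf{tx}))\ge w$. Then $\sigma^*$ is an equilibrium strategy.
   Context: Transaction packaging game. Fix a positive integer $k$ (block capacity), a real $\lambda>0$ (network latency parameter), a finite set $M$ (the mempool) of transactions with $|M|\ge k$, and a gas price function $v:M\to(0,\infty)$. Miners are indexed by $i\in[0,1]$. A pure strategy of a miner is a subset $D\subseteq M$ with $|D|=k$; let $\mathcal{S}$ be the set of such subsets. A mixed strategy is a probability distribution $\sigma$ on $\mathcal{S}$, and its marginal probability is $p^\sigma(\mathsf{tx})=\sum_{D\in\mathcal{S}}\sigma(D)\mathbf{1}[\mathsf{tx}\in D]$. Conditional on miner $i$ mining a block $B_i$ (drawn from her mixed strategy $\sigma_i$), the number $\gamma$ of other blocks mined is distributed as $\mathrm{Poisson}(\lambda)$; they are mined by miners chosen independently and uniformly at random from $[0,1]$, each such miner $j$ producing a block $B_j$ drawn independently from her mixed strategy $\sigma_j$. The utility of miner $i$ is $u_i(\sigma_i,\sigma_{-i})=\sum_{\mathsf{tx}\in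 M}p^{\sigma_i}(\mathsf{tx})\,v(\mathsf{tx})\,\Pr[\text{no other mined block }B_j\ (j\neq i)\text{ contains }\mathsf{tx}]$. A mixed strategy $\sigma^*$ is an equilibrium strategy if for every $i\in[0,1]$ and every mixed strategy $\sigma$, $u_i(\sigma,\sigma^*_{-i})\le u_i(\sigma^*,\sigma^*_{-i})$, where $\sigma^*_{-i}$ denotes the profile in which all miners other than $i$ use $\sigma^*$. *)

(* Defs.v *)
From HB Require Import structures.
From mathcomp Require Import all_boot all_order all_algebra.
From mathcomp Require Import all_classical all_reals all_analysis.
Set Implicit Arguments. Unset Strict Implicit. Unset Printing Implicit Defensive.
Import Order.TTheory GRing.Theory Num.Theory.
Local Open Scope ring_scope.

Section Game.
Variables (R : realType) (M : finType).

(* A mixed strategy: a probability distribution on the k-subsets of M,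
   represented as a function on all subsets vanishing off the k-subsets. *)
Definition mixed_strategy (k : nat) (sigma : {ffun {set M} -> R}) : Prop :=
  [/\ (forall D : {set M}, 0 <= sigma D),
      (forall D : {set M}, #|D| != k -> sigma D = 0) &
      \sum_(D : {set M}) sigma D = 1].

Definition marginal (sigma : {ffun {set M} -> R}) (tx : M) : R :=
  \sum_(D : {set M}) sigma D * (tx \in D)%:R.

(* Probability that none of the gamma ~ Poisson(lambda) other mined blocks
   contains a transaction that each of them (independently) contains with
   probability p:  sum_{n>=0} Pr[gamma = n] (1 - p)^n. *)
Definition no_other_prob (lambda p : R) : R :=
  limn (fun N => \sum_(0 <= n < N) poisson_pmf lambda n * (1 - p) ^+ n).

(* Utility of a miner playing sigma while all other miners play sigma_star. *)
Definition utility (lambda : R) (v : M -> R)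
    (sigma sigma_star : {ffun {set M} -> R}) : R :=
  \sum_(tx : M) marginal sigma tx * v tx
                 * no_other_prob lambda (marginal sigma_star tx).

Definition equilibrium (k : nat) (lambda : R) (v : M -> R)
    (sigma_star : {ffun {set M} -> R}) : Prop :=
  forall i : R, 0 <= i <= 1 ->
  forall sigma, mixed_strategy k sigma ->
    utility lambda v sigma sigma_star <= utility lambda v sigma_star sigma_star.

End Game.

(* Main.v *)
Require Import Defs.
From HB Require Import structures.
From mathcomp Require Import all_boot all_order all_algebra.
From mathcomp Require Import all_classical all_reals all_analysis.
From mathcomp Require Import ring.
Import Order.TTheory GRing.Theory Num.Theory.
Import numFieldTopology.Exports numFieldNormedType.Exports.
Local Open Scope ring_scope.

Lemma no_other_probE (R : realType) (lambda p : R) : 0 < lambda ->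
  no_other_prob lambda p = expR (- lambda * p).
Proof.
move=> l0; rewrite /no_other_prob.
have -> : (fun N => \sum_(0 <= n < N) poisson_pmf lambda n * (1 - p) ^+ n) =
   (fun N => expR (- lambda) * series (exp_coeff (lambda * (1 - p))) N).
  apply/funext => N; rewrite /series /= big_distrr /=; apply: eq_bigr => n _.
  by rewrite /poisson_pmf l0 /exp_coeff /= exprMn; ring.
have cv := is_cvg_series_exp_coeff (lambda * (1 - p)).
have E : limn (fun N => (series (exp_coeff (lambda * (1 - p))) N : R)) = expR (lambda * (1 - p)).
  by rewrite expRE /pseries -exp_coeffE.
apply: cvg_lim => //.
have -> : expR (- lambda * p) = expR (- lambda) * expR (lambda * (1 - p)).
  by rewrite -expRD; congr expR; ring.
rewrite -E; apply: cvgMr; exact: cv.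
Qed.

Lemma marginal_ge0 {R : realType} {M : finType} {k} {s : {ffun {set M} -> R}} tx :
  mixed_strategy k s -> 0 <= marginal s tx.
Proof.
case=> h0 _ _; apply: sumr_ge0 => D _; apply: mulr_ge0 => //; exact: ler0n.
Qed.

Lemma marginal_le1 {R : realType} {M : finType} {k} {s : {ffun {set M} -> R}} tx :
  mixed_strategy k s -> marginal s tx <= 1.
Proof.
case=> h0 _ h1; rewrite -h1; apply: ler_sum => D _.
by case: (tx \in D); rewrite ?mulr1 ?mulr0.
Qed.

Lemma sum_marginal {R : realType} {M : finType} {k} {s : {ffun {set M} -> R}} :
  mixed_strategy k s -> \sum_tx marginal s tx = k%:R.
Proof.
case=> h0 hk h1; rewrite /marginal exchange_big /=.
transitivity (\sum_(D : {set M}) s D * k%:R); last by rewrite -big_distrl /= h1 mul1r.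
apply: eq_bigr => D _; rewrite -big_distrr /=.
have [eD|nD] : #|D| = k \/ #|D| <> k by case: (#|D| =P k); [left|right].
  2: by rewrite hk ?mul0r //; apply/eqP.
congr (_ * _); rewrite -eD.
rewrite (eq_bigr (fun tx => if tx \in D then 1 else 0)); last by move=> tx _; case: (tx \in D).
by rewrite -big_mkcond /= sumr_const.
Qed.

Theorem lemma3p2 (R : realType) (M : finType) (k : nat) (lambda : R)
    (v : M -> R) (sigma_star : {ffun {set M} -> R}) :
  (0 < k)%N -> (k <= #|M|)%N -> 0 < lambda ->
  (forall tx, 0 < v tx) ->
  mixed_strategy k sigma_star ->
  (exists w : R, forall tx : M,
      [/\ marginal sigma_star tx = 0 ->
            v tx * expR (- lambda * marginal sigma_star tx) <= w,
          0 < marginal sigma_star tx < 1 ->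
            v tx * expR (- lambda * marginal sigma_star tx) = w &
          marginal sigma_star tx = 1 ->
            v tx * expR (- lambda * marginal sigma_star tx) >= w]) ->
  equilibrium k lambda v sigma_star.
Proof.
move=> k0 kM l0 v0 hstar [w hw] i _ sigma hsig.
rewrite /utility.
under eq_bigr do rewrite no_other_probE //.
under [X in _ <= X]eq_bigr do rewrite no_other_probE //.
set ps := marginal sigma_star; set pg := marginal sigma.
set f := fun tx => v tx * expR (- lambda * ps tx).
rewrite -subr_ge0 -sumrB.
rewrite (eq_bigr (fun tx => (ps tx - pg tx) * (f tx - w) + w * (ps tx - pg tx)));
  last by move=> tx _; rewrite /f; ring.
rewrite big_split /= -big_distrr /= sumrB /ps /pg !(sum_marginal hstar) !(sum_marginal hsig).
rewrite subrr mulr0 addr0.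
apply: sumr_ge0 => tx _.
have g0 := marginal_ge0 tx hsig; have g1 := marginal_le1 tx hsig.
have s0 := marginal_ge0 tx hstar; have s1 := marginal_le1 tx hstar.
case: (hw tx) => H0 H01 H1; rewrite /f.
have [e0|ne0] := eqVneq (marginal sigma_star tx) 0.
  have := H0 e0; rewrite -subr_le0 => A.
  apply: mulr_le0 => //; rewrite e0 sub0r oppr_le0 //.
have [e1|ne1] := eqVneq (marginal sigma_star tx) 1.
  have := H1 e1; rewrite -subr_ge0 => A.
  by apply: mulr_ge0 => //; rewrite e1 subr_ge0.
rewrite H01 ?subrr ?mulr0 //.
by rewrite lt_neqAle eq_sym ne0 s0 lt_neqAle ne1 s1.
Qed.
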